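(* Let $(X,d,A)$ be a metric pair and $p\in[1,\infty]$. If $(X,d)$ is separable, then $(\overline{D}_p(X,A),W_p)$ is separable. Conversely, if $(\overline{D}_p(X,A),W_p)$ is separable, then $(X/A,d_p)$ is separable.
   Context: A metric on $X$ is a map $d:X\times X\to[0,\infty]$ with $d(x,x)=0$, symmetry and the triangle inequality (infinite distances allowed, $d(x,y)=0$ need not imply $x=y$); a metric pair $(X,d,A)$ is such a space with a closed subset $A$. Write $d(x,A)=\inf_{a\in A}d(x,a)$, $A^\delta=\{x:d(x,A)<\delta\}$. $\overline{D}(X,A)$ is the set of countable formal sums $\hat\alpha=\sum_{i\in I}x_i$ of points of $X\setminus A$ (repetitions allowed); $0$ the empty sum. A matching of $\hat\alpha=\sum_{i\in I}x_i$, $\hat\beta=\sum_{j\in J}y_j$ is a formal sum $\sum_{k\in K}(x_k,y_{\varphi(k)})+\sum_{i\in I\setminus K}(x_i,z_i)+\sum_{j\in J\setminus\varphi(K)}(w_j,y_j)$ with $K\subset I$, $\varphi$ injective, $z_i,w_j\in A$; its $p$-cost is the $\ell^p$ norm (sup norm if $p=\infty$) of the distances of paired points; $W_p$ is the infimum of $p$-costs. $u_\delta(\alpha)$, $\ell_\delta(\alpha)$ are the restrictions of $\hat\alpha$ to $X\setminus A^\delta$ and to $A^\delta\setminus A$. For $p<\infty$, $\overline{D}_p(X,A)=\{\alpha: |u_\infty(\alpha)|<\infty,\ W_p(\ell_\infty(\alpha),0)<\infty\}$; $\overline{D}_\infty(X,A)=\{\alpha:|u_\delta(\alpha)|<\infty\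 \forall\delta>0\}$. $X/A$ is the quotient set collapsing $A$ to a point, with the metric $d_p([x],[y])=\min\big(d(x,y),\|(d(x,A),d(y,A))\|_p\big)$ (which is well defined on $X/A$). *)

(* Defs.v *)
From HB Require Import structures.
From mathcomp Require Import all_boot all_order all_algebra.
From mathcomp Require Import all_classical all_reals.
From mathcomp Require Import ereal esum exp.
Set Implicit Arguments. Unset Strict Implicit. Unset Printing Implicit Defensive.
Import Order.TTheory GRing.Theory Num.Theory.
Local Open Scope classical_set_scope.
Local Open Scope ereal_scope.

Section Defs.
Context {R : realType} {X : Type}.

Definition is_emetric (d : X -> X -> \bar R) :=
  [/\ (forall x y, 0 <= d x y), (forall x, d x x = 0),
      (forall x y, d x y = d y x) &
      (forall x y z, d x z <= d x y + d y z)].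

(* d(x,A) = inf_{a in A} d(x,a)  (= +oo if A is empty) *)
Definition dist_set (d : X -> X -> \bar R) (A : set X) (x : X) : \bar R :=
  ereal_inf (d x @` A).

Definition closed_in (d : X -> X -> \bar R) (A : set X) :=
  forall x, dist_set d A x = 0 -> A x.

Definition thick (d : X -> X -> \bar R) (A : set X) (delta : \bar R) : set X :=
  [set x | dist_set d A x < delta].

Definition lpnorm {T : choiceType} (p : \bar R) (S : set T) (f : T -> \bar R)
  : \bar R :=
  match p with
  | r%:E => poweR (esum S (fun i => poweR (f i) r)) (r^-1)%R
  | _ => ereal_sup ([set 0] `|` f @` S)
  end.

(* A countable formal sum sum_{i in I} x_i is represented by an index set
   I : set nat together with the points x : nat -> X (only x i, i in I,
   matter).  Formal sums are identified up to reindexing; W_p below is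
   invariant under reindexing. *)
Definition diagram := (set nat * (nat -> X))%type.

Definition is_diagram (A : set X) (a : diagram) :=
  forall i, a.1 i -> ~ A (a.2 i).

Definition restrict (U : set X) (a : diagram) : diagram :=
  (a.1 `&` (fun i => U (a.2 i)), a.2).

Definition diag0 (x0 : nat -> X) : diagram := (set0, x0).

(* matching of a = sum_{i in I} x_i and b = sum_{j in J} y_j given by
   K subset I, phi injective on K with phi(K) subset J, z_i in A for i in I\K,
   w_j in A for j in J \ phi(K). *)
Definition is_matching (A : set X) (a b : diagram) (K : set nat)
  (phi : nat -> nat) (z w : nat -> X) :=
  [/\ K `<=` a.1,
      (forall k1 k2, K k1 -> K k2 -> phi k1 = phi k2 -> k1 = k2),
      phi @` K `<=` b.1,
      (forall i, a.1 i -> ~ K i -> A (z i)) &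
      (forall j, b.1 j -> ~ (phi @` K) j -> A (w j))].

(* p-cost of that matching: l^p norm of the distances of paired points;
   inl i indexes the pair containing x_i, inr j the pair (w_j, y_j). *)
Definition matching_cost (d : X -> X -> \bar R) (p : \bar R) (a b : diagram)
  (K : set nat) (phi : nat -> nat) (z w : nat -> X) : \bar R :=
  lpnorm p (inl @` a.1 `|` inr @` (b.1 `\` phi @` K))
    (fun t : nat + nat => match t with
       | inl i => if `[< K i >] then d (a.2 i) (b.2 (phi i))
                  else d (a.2 i) (z i)
       | inr j => d (w j) (b.2 j)
       end).

Definition Wp (d : X -> X -> \bar R) (A : set X) (p : \bar R) (a b : diagram)
  : \bar R :=
  ereal_inf [set c | exists K phi z w,
    is_matching A a b K phi z w /\ c = matching_cost d p a b K phi z w].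

Definition u_part d A (delta : \bar R) (a : diagram) : diagram :=
  restrict (~` thick d A delta) a.
Definition l_part d A (delta : \bar R) (a : diagram) : diagram :=
  restrict (thick d A delta `\` A) a.

Definition Dp (d : X -> X -> \bar R) (A : set X) (p : \bar R) : set diagram :=
  [set a | is_diagram A a /\
    match p with
    | +oo => forall delta : R, (0 < delta)%R ->
               finite_set (u_part d A delta%:E a).1
    | _ => finite_set (u_part d A +oo a).1 /\
           Wp d A p (l_part d A +oo a) (diag0 a.2) < +oo
    end].

(* d_p on X/A, pulled back to X along the quotient map x |-> [x] *)
Definition quot_dist (d : X -> X -> \bar R) (A : set X) (p : \bar R)
  (x y : X) : \bar R :=
  Order.min (d x y)
    (lpnorm p [set: bool] (fun b => if b then dist_set d A x
                                    else dist_set d A y)).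

End Defs.

Definition separable_in {R : realType} {T : Type} (S : set T)
  (dist : T -> T -> \bar R) :=
  exists D : set T, [/\ D `<=` S, countable D &
    forall s, S s -> forall e : R, (0 < e)%R ->
      exists2 t, D t & dist s t < e%:E].

(* Main.v *)
Require Import Defs.
From HB Require Import structures.
From mathcomp Require Import all_boot all_order all_algebra.
From mathcomp Require Import all_classical all_reals.
From mathcomp Require Import ereal esum exp.
From mathcomp Require Import lra.
Set Implicit Arguments. Unset Strict Implicit. Unset Printing Implicit Defensive.
Import Order.TTheory GRing.Theory Num.Theory.
Local Open Scope classical_set_scope.
Local Open Scope ereal_scope.

Section H.
Context {R : realType} {X : Type}.
Implicit Types (d : X -> X -> \bar R) (A : set X).

Lemma dist_set_le d A x a : A a -> dist_set d A x <= d x a.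
Proof. by move=> Aa; apply: ereal_inf_lbound; exists a. Qed.

Lemma dist_set_ge0 d A x : is_emetric d -> 0 <= dist_set d A x.
Proof. by case=> d0 _ _ _; apply: le_ereal_inf_tmp => _ [a _ <-]. Qed.

Lemma dist_set_lt d A x c : dist_set d A x < c -> exists2 a, A a & d x a < c.
Proof. by move=> /ereal_inf_lt [_ [a Aa <-]] h; exists a. Qed.

Lemma lpnorm_ge {T : choiceType} (p : \bar R) (S : set T) f i :
  1 <= p -> S i -> 0 <= f i -> f i <= lpnorm p S f.
Proof.
case: p => [r||] //; rewrite ?lee_fin => r1 Si fi0 /=; last first.
  by apply: ereal_sup_ubound; right; exists i.
have r0 : (0 < r)%R by apply: lt_le_trans r1.
have -> : f i = (f i `^ r) `^ r^-1.
  by rewrite -poweRrM divff ?gt_eqF // poweRe1.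
have H : f i `^ r <= esum S (fun j => f j `^ r).
  apply: esum_ge; exists [set i]; first by split; [exact: finite_set1| move=> _ ->].
  by rewrite fsbig_set1.
apply: (gt0_ler_poweR _ _ _ H); rewrite ?invr_ge0 ?ltW //.
- by rewrite in_itv /= poweR_ge0 leey.
- by rewrite in_itv /= esum_ge0 ?leey // => *; exact: poweR_ge0.
Qed.

Lemma esum_fin_lty {T : choiceType} (S : set T) (f : T -> \bar R) :
  finite_set S -> (forall t, S t -> 0 <= f t) -> (forall t, S t -> f t < +oo) ->
  esum S f < +oo.
Proof.
move=> /finite_seqP [s ->] f0 flt.
rewrite esum_fset; last 2 first.
- by apply/finite_seqP; exists s.
- by move=> t; rewrite inE; apply: f0.
rewrite -(_ : [set` undup s] = [set` s]); last first.
  by apply/seteqP; split=> t /=; rewrite mem_undup.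
rewrite -fsbig_seq ?undup_uniq // big_seq_cond.
by apply: lte_sum_pinfty => t /andP [] ; rewrite mem_undup => /flt.
Qed.

Lemma esum_sub {T : choiceType} (S S' : set T) (f : T -> \bar R) :
  S `<=` S' -> (forall t, S' t -> 0 <= f t) -> esum S f <= esum S' f.
Proof.
move=> SS' f0; rewrite (esum_mkcond S) (esum_mkcond S').
apply: le_esum => t _; case: ifPn => tS; first by rewrite ifT // inE; apply: SS'; rewrite -inE.
by case: ifPn => // /[!inE] /f0.
Qed.

Lemma sum_le_const {T : eqType} (s : seq T) (h : T -> \bar R) (c : R) :
  (forall t, t \in s -> h t <= c%:E) -> \sum_(t <- s) h t <= ((size s)%:R * c)%:E.
Proof.
elim: s => [|a s IH] hc; first by rewrite big_nil mul0r.
rewrite big_cons /= -addn1 natrD mulrDl mul1r EFinD addeC.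
have h1 : h a <= c%:E by apply: hc; rewrite mem_head.
have h2 : \sum_(t <- s) h t <= ((size s)%:R * c)%:E.
  by apply: IH => t ts; apply: hc; rewrite in_cons ts orbT.
exact: leeD h1 h2.
Qed.


Lemma fin_Dp d A p (a : diagram) : is_emetric d -> 1 <= p ->
  finite_set a.1 -> is_diagram A a -> Dp d A p a.
Proof.
move=> dm p1 afin adiag; split => //.
move: p1; case: p => [r||] // p1; last first.
  by move=> delta _; apply: (sub_finite_set _ afin); exact: subIsetl.
split; first by apply: (sub_finite_set _ afin); exact: subIsetl.
have /choice [z hz] : forall i, exists y,
    dist_set d A (a.2 i) < +oo -> A y /\ d (a.2 i) y < +oo.
  move=> i; case: (pselect (dist_set d A (a.2 i) < +oo)) => h.
    by have [y Ay dy] := dist_set_lt h; exists y.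
  by exists (a.2 i).
apply: (le_lt_trans (ereal_inf_lbound _)).
  exists set0, id, z, z; split; last reflexivity.
  split => //.
  - by move=> _ [? []].
  - by move=> i [_ [hi _]] _; case: (hz _ hi).
have r0 : r != 0%R by move: p1; rewrite lee_fin => p1; rewrite gt_eqF // (lt_le_trans _ p1).
rewrite /matching_cost /lpnorm; apply: poweR_lty.
apply: esum_fin_lty.
- rewrite finite_setU; split; apply: finite_image.
    by apply: (sub_finite_set _ afin); exact: subIsetl.
  by apply: (sub_finite_set _ (@finite_set0 nat)); exact: subDsetl.
- by move=> *; exact: poweR_ge0.
- move=> [i|j] /=; last first.
    by case=> [[? _ //]|[? [[] //]]].
  case=> [[i' [_ [hi _]] [<-]]|[? _ //]].
  rewrite asboolF //; apply: poweR_lty.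
  by case: (hz _ hi).
Qed.


Lemma quot_le d A p x b : is_emetric d -> 1 <= p -> A b ->
  quot_dist d A p x b <= dist_set d A x.
Proof.
move=> dm p1 Ab; have [d0 dxx _ _] := dm.
have db : dist_set d A b = 0.
  by apply/le_anti; rewrite dist_set_ge0 // andbT -(dxx b) dist_set_le.
have u0 := dist_set_ge0 A x dm.
rewrite /quot_dist db ge_min; apply/orP; right.
move: p1; case: p => [r||] // p1 /=; last first.
  by apply: ge_ereal_sup => y [->|[[] _ <-]].
have r0 : (0 < r)%R by move: p1; rewrite lee_fin => p1; rewrite (lt_le_trans _ p1).
rewrite (esumID [set true]); last by move=> *; exact: poweR_ge0.
rewrite setTI esum_set1 ?poweR_ge0 //= esum1 ?adde0; last first.
  by move=> [] [_ /= h] //; rewrite powR0 // gt_eqF.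
by rewrite -poweRrM divff ?gt_eqF // poweRe1.
Qed.

Lemma dir2 d A p : is_emetric d -> 1 <= p ->
  separable_in (Dp d A p) (Wp d A p) -> separable_in [set: X] (quot_dist d A p).
Proof.
move=> dm p1 [D [DDp Dc Dd]]; have [d0 dxx _ _] := dm.
have [B [BA Bc Bne]] : exists B, [/\ B `<=` A, countable B &
    forall a, A a -> exists b, B b].
  case: (pselect (exists a, A a)) => [[a Aa]|nA].
    by exists [set a]; split => // [_ ->|_ _] //; exists a.
  by exists set0; split => // a Aa; exfalso; apply: nA; exists a.
pose U := \bigcup_(t in D) (t.2 @` t.1).
exists (\bigcup_(bb in [set: bool]) (if bb then U else B)); split => //.
  apply: bigcup_countable => // -[] _ //.
  apply: bigcup_countable => // t _.
  exact: (sub_countable (card_image_le _ _)).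
move=> x _ e e0.
case: (pselect (A x)) => Ax.
  have [b Bb] := Bne _ Ax; exists b; first by exists false.
  apply: (le_lt_trans (quot_le x dm p1 (BA _ Bb))).
  by apply: (le_lt_trans (dist_set_le _ _ Ax)); rewrite dxx lte_fin.
pose s : diagram := ([set 0%N], fun _ => x).
have sD : Dp d A p s.
  apply: fin_Dp => //; first exact: finite_set1.
have [t Dt Wst] := Dd s sD e e0.
have [_ [K [phi [z [w [hm ->]]]]] hc] := ereal_inf_lt Wst.
case: hm => KI phiinj phiK zA wA.
have key : (if `[< K 0%N >] then d x (t.2 (phi 0%N)) else d x (z 0%N)) < e%:E.
  apply: le_lt_trans hc; rewrite /matching_cost.
  set f := (fun t0 : nat + nat => _).
  have -> : (if `[< K 0%N >] then d x (t.2 (phi 0%N)) else d x (z 0%N)) = f (inl 0%N) by [].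
  apply: lpnorm_ge => //; first by left; exists 0%N.
  by rewrite /f; case: ifP.
case: (pselect (K 0%N)) => K0.
  rewrite asboolT // in key.
  exists (t.2 (phi 0%N)).
    exists true => //; exists t => //; exists (phi 0%N) => //.
    by apply: phiK; exists 0%N.
  by apply: le_lt_trans key; rewrite /quot_dist ge_min lexx.
rewrite asboolF // in key.
have Az := zA 0%N (erefl _) K0.
have [b Bb] := Bne _ Az; exists b; first by exists false.
apply: (le_lt_trans (quot_le x dm p1 (BA _ Bb))).
exact: (le_lt_trans (dist_set_le _ _ Az)).
Qed.


Lemma eq_lpnorm {T : choiceType} (p : \bar R) (S : set T) (f f' : T -> \bar R) :
  (forall t, S t -> f t = f' t) -> lpnorm p S f = lpnorm p S f'.
Proof.
move=> ff'; case: p => [r||] /=.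
- by rewrite (eq_esum (b := fun i => f' i `^ r)) // => t /ff' ->.
- by rewrite (eq_imagel ff').
- by rewrite (eq_imagel ff').
Qed.

Definition tm (g : nat -> X) (m : seq nat) : diagram :=
  ([set j | (j < size m)%N], fun j => g (nth 0%N m j)).

Lemma build d A p (g : nat -> X) (s : diagram) (Kp : set nat) (z : nat -> X)
    (kf : nat -> nat) :
  is_emetric d -> 1 <= p -> finite_set Kp -> Kp `<=` s.1 ->
  (forall i, s.1 i -> ~ Kp i -> A (z i)) ->
  (forall i, Kp i -> ~ A (g (kf i))) ->
  exists m : seq nat, Dp d A p (tm g m) /\
    Wp d A p s (tm g m) <= lpnorm p (@inl nat nat @` s.1)
      (fun t : nat + nat => match t with
                | inl i => if `[< Kp i >] then d (s.2 i) (g (kf i))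
                           else d (s.2 i) (z i)
                | inr _ => 0 end).
Proof.
move=> dm p1 /finite_seqP [sq0 Kpe] Ks zA gA.
pose sq := undup sq0.
have hK : forall i, Kp i <-> (i \in sq) by move=> i; rewrite Kpe /= mem_undup.
have usq : uniq sq by exact: undup_uniq.
exists (map kf sq).
have nthK : forall j, (j < size sq)%N -> Kp (nth 0%N sq j).
  by move=> j jlt; apply/hK; exact: mem_nth.
have tmE : forall j, (j < size sq)%N ->
    (tm g (map kf sq)).2 j = g (kf (nth 0%N sq j)).
  by move=> j jlt; rewrite /= (nth_map 0%N).
split.
  apply: fin_Dp => //; first exact: (finite_II (size (map kf sq))).
  move=> j /=; rewrite size_map => jlt.
  by rewrite (nth_map 0%N) //; apply: gA; apply: nthK.
have cover : forall j, (tm g (map kf sq)).1 j -> ((fun i => index i sq) @` Kp) j.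
  move=> j /=; rewrite size_map => jlt.
  by exists (nth 0%N sq j); [apply: nthK | rewrite index_uniq].
apply: (le_trans (ereal_inf_lbound _)).
  exists Kp, (fun i => index i sq), z, z; split; last reflexivity.
  split => //.
  - move=> k1 k2 /hK k1s /hK k2s e.
    by rewrite -(nth_index 0%N k1s) e nth_index.
  - by move=> _ [i /hK Ki <-] /=; rewrite size_map index_mem.
  - by move=> j /cover h /(_ h).
rewrite /matching_cost.
have -> : (tm g (map kf sq)).1 `\` (fun i => index i sq) @` Kp = set0.
  by apply/seteqP; split => // j [/cover].
rewrite image_set0 setU0; rewrite le_eqVlt; apply/orP; left; apply/eqP; apply: eq_lpnorm => _ [i si <-].
case: (asboolP (Kp i)) => // /[dup] Ki /hK iin.
by rewrite tmE ?index_mem // nth_index.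
Qed.


Definition Fn d (s : diagram) (Kp : set nat) (z : nat -> X) (g : nat -> X)
  (kf : nat -> nat) (t : nat + nat) : \bar R :=
  match t with
  | inl i => if `[< Kp i >] then d (s.2 i) (g (kf i)) else d (s.2 i) (z i)
  | inr _ => 0 end.

Lemma claim_inf d A (g : nat -> X) (s : diagram) (e : R) :
  is_emetric d -> (0 < e)%R -> Dp d A +oo s ->
  (forall x, ~ A x -> forall eta : R, (0 < eta)%R ->
     exists k, ~ A (g k) /\ d x (g k) < eta%:E) ->
  exists Kp z kf, [/\ finite_set Kp, Kp `<=` s.1,
    (forall i, s.1 i -> ~ Kp i -> A (z i)),
    (forall i, Kp i -> ~ A (g (kf i))) &
    lpnorm +oo (@inl nat nat @` s.1) (Fn d s Kp z g kf) < e%:E].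
Proof.
move=> dm e0 [sdiag sp] approx; have [d0 _ _ _] := dm.
have del0 : (0 < e / 2)%R by lra.
pose Kp := (u_part d A (e / 2)%:E s).1.
have /choice [z hz] : forall i, exists y,
    dist_set d A (s.2 i) < (e / 2)%:E -> A y /\ d (s.2 i) y < (e / 2)%:E.
  move=> i; case: (pselect (dist_set d A (s.2 i) < (e / 2)%:E)) => h.
    by have [y Ay dy] := dist_set_lt h; exists y.
  by exists (s.2 i).
have /choice [kf hk] : forall i, exists k,
    ~ A (s.2 i) -> ~ A (g k) /\ d (s.2 i) (g k) < (e / 2)%:E.
  move=> i; case: (pselect (A (s.2 i))) => h; first by exists 0%N.
  by have [k hk] := approx _ h _ del0; exists k.
exists Kp, z, kf; split.
- exact: sp.
- exact: subIsetl.
- move=> i si nK; case: (pselect (thick d A (e / 2)%:E (s.2 i))) => h.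
    by case: (hz i h).
  by exfalso; apply: nK.
- by move=> i [si _]; case: (hk i (sdiag i si)).
apply: (@le_lt_trans _ _ (e / 2)%:E); last by rewrite lte_fin; lra.
apply: ge_ereal_sup => y [->|[_ [i si <-] <-]]; first by rewrite lee_fin ltW.
rewrite /Fn; case: (asboolP (Kp i)) => Ki; apply: ltW.
  by case: (hk i (sdiag i si)).
case: (pselect (thick d A (e / 2)%:E (s.2 i))) => h; first by case: (hz i h).
by exfalso; apply: Ki.
Qed.


Lemma claim_r d A (g : nat -> X) (s : diagram) (e r : R) :
  is_emetric d -> (1 <= r)%R -> (0 < e)%R -> Dp d A r%:E s ->
  (forall x, ~ A x -> forall eta : R, (0 < eta)%R ->
     exists k, ~ A (g k) /\ d x (g k) < eta%:E) ->
  exists Kp z kf, [/\ finite_set Kp, Kp `<=` s.1,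
    (forall i, s.1 i -> ~ Kp i -> A (z i)),
    (forall i, Kp i -> ~ A (g (kf i))) &
    lpnorm r%:E (@inl nat nat @` s.1) (Fn d s Kp z g kf) < e%:E].
Proof.
move=> dm r1 e0 [sdiag [Ufin Wlt]] approx; have [d0 _ _ _] := dm.
have r0 : (0 < r)%R by lra.
have rV0 : (r^-1 != 0)%R by rewrite invr_neq0 // gt_eqF.
have [_ [K0 [phi0 [z [w0 [hm ->]]]]] c0lt] := ereal_inf_lt Wlt.
case: hm => K0l _ phiK zA0 _.
have nK0 : forall i, ~ K0 i by move=> i Ki; apply: (phiK (phi0 i)); exists i.
pose L := (l_part d A +oo s).1.
have zA : forall i, L i -> A (z i) by move=> i Li; apply: zA0 => //; exact: nK0.
pose gf i := poweR (d (s.2 i) (z i)) r.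
have gf0 : forall i, 0 <= gf i by move=> i; exact: poweR_ge0.
have Glt : esum L gf < +oo.
  have := lty_poweRy rV0 c0lt; apply: le_lt_trans.
  apply: (le_trans _ (esum_sub _ _)); last 2 first.
  - exact: subsetUl.
  - by move=> *; exact: poweR_ge0.
  rewrite esum_image; last by move=> ? ? _ _ [].
  by rewrite le_eqVlt; apply/orP; left; apply/eqP; apply: eq_esum => i Li /=; rewrite asboolF //; exact: nK0.
have Gfin : esum L gf \is a fin_num by rewrite ge0_fin_numE //; apply: esum_ge0 => *; exact: gf0.
pose q := ((e / 2) `^ r)%R.
have q0 : (0 < q)%R by apply: powR_gt0; lra.
have q20 : (0 < q / 2)%R by lra.
have [_ [F [Ffin FL] <-] Fgt] := @ub_ereal_sup_adherent _ _ (q / 2) q20 Gfin.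
have tail : esum (L `&` ~` F) gf <= (q / 2)%:E.
  have hID := esumID F L gf (fun i _ => gf0 i).
  rewrite (setIidr FL) (@esum_fset _ _ F) // in hID.
  have afin : \sum_(i \in F) gf i \is a fin_num.
    rewrite ge0_fin_numE; last by apply: fsume_ge0 => *; exact: gf0.
    rewrite -esum_fset //.
    by apply: le_lt_trans Glt; apply: esum_sub.
  have bfin : esum (L `&` ~` F) gf \is a fin_num.
    rewrite ge0_fin_numE; last by apply: esum_ge0 => *; exact: gf0.
    by apply: le_lt_trans Glt; apply: esum_sub => // i [].
  have Fgt' : esum L gf - (q / 2)%:E < \sum_(i \in F) gf i := Fgt.
  move: Fgt' hID; rewrite -(fineK afin) -(fineK bfin) -(fineK Gfin).
  rewrite lteBlDr // -EFinD lte_fin -EFinD lee_fin => h1 h2; have h3 := EFin_inj h2; lra.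
pose U := (u_part d A +oo s).1.
pose Kp := U `|` F.
have Kfin : finite_set Kp by rewrite /Kp finite_setU.
have Ks : Kp `<=` s.1 by move=> i [[]//|/FL []].
have [sq0 Kpe] := (iffLR (finite_seqP _)) Kfin.
pose sq := undup sq0.
have usq : uniq sq by exact: undup_uniq.
have KpE : Kp = [set` sq].
  by rewrite Kpe; apply/seteqP; split => i /=; rewrite mem_undup.
pose N := size sq.
pose a := (q / 2 / (N%:R + 1))%R.
have a0 : (0 < a)%R by apply: divr_gt0 => //; apply: ltr_wpDl => //.
have aN : (a * (N%:R + 1) = q / 2)%R by rewrite /a mulfVK // gt_eqF // ltr_wpDl.
pose eta := (a `^ r^-1)%R.
have eta0 : (0 < eta)%R by apply: powR_gt0.
have etar : (eta `^ r = a)%R.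
  by rewrite /eta -powRrM mulVf ?gt_eqF // powRr1 // ltW.
have /choice [kf hk] : forall i, exists k,
    ~ A (s.2 i) -> ~ A (g k) /\ d (s.2 i) (g k) < eta%:E.
  move=> i; case: (pselect (A (s.2 i))) => h; first by exists 0%N.
  by have [k hk] := approx _ h _ eta0; exists k.
exists Kp, z, kf; split => //.
- move=> i si nK; apply: zA; split => //; split; last exact: sdiag.
  by apply: contrapT => nth; apply: nK; left.
- by move=> i /Ks si; case: (hk i (sdiag i si)).
pose H := fun i => Fn d s Kp z g kf (inl i) `^ r.
have S1 : esum (@inl nat nat @` s.1) (fun t => Fn d s Kp z g kf t `^ r) <= q%:E.
  rewrite esum_image; last by move=> ? ? _ _ [].
  rewrite (esumID Kp); last by move=> *; exact: poweR_ge0.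
  rewrite (setIidr Ks).
  have P1 : esum Kp H <= (N%:R * a)%:E.
    rewrite [X in esum X _]KpE esum_fset; last 2 first.
    - by rewrite -KpE.
    - by move=> *; exact: poweR_ge0.
    rewrite -fsbig_seq //; apply: sum_le_const => i isq.
    have Ki : Kp i by rewrite KpE.
    rewrite /H /Fn asboolT // -etar -poweR_EFin.
    apply: gt0_ler_poweR; rewrite ?ltW //.
    + by rewrite in_itv /= d0 leey.
    + by rewrite in_itv /= lee_fin ltW // leey.
    + by case: (hk i (sdiag i (Ks i Ki))).
  have P2 : esum (s.1 `&` ~` Kp) H <= (q / 2)%:E.
    apply: le_trans tail.
    rewrite (eq_esum (b := gf)); last first.
      by move=> i [si nK]; rewrite /H /Fn asboolF.
    apply: esum_sub => [i [si nK]|i _]; last exact: gf0.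
    split; last by move=> Fi; apply: nK; right.
    split => //; split; last exact: sdiag.
    by apply: contrapT => nth; apply: nK; left.
  apply: le_trans (leeD P1 P2) _; rewrite -EFinD lee_fin.
  have hN : (0 <= N%:R :> R)%R by [].
  nra.
rewrite /lpnorm.
apply: (le_lt_trans (gt0_ler_poweR _ _ _ S1)).
- by rewrite invr_ge0 ltW.
- by rewrite in_itv /= esum_ge0 ?leey // => *; exact: poweR_ge0.
- by rewrite in_itv /= lee_fin ltW // leey.
rewrite poweR_EFin /q -powRrM divff ?gt_eqF // powRr1; last by lra.
rewrite lte_fin; lra.
Qed.


Lemma dir1 d A p : is_emetric d -> closed_in d A -> 1 <= p ->
  separable_in [set: X] d -> separable_in (Dp d A p) (Wp d A p).
Proof.
move=> dm Acl p1 [D0 [_ D0c D0d]]; have [d0 dxx _ _] := dm.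
case: (pselect (exists x : X, True)) => [[x0 _]|nX]; last first.
  by exists set0; split => // s _; exfalso; apply: nX; exists (s.2 0%N).
have /countable_injP [f finj] := D0c.
have /choice [g hg] : forall n, exists y,
    (exists y', D0 y' /\ f y' = n) -> D0 y /\ f y = n.
  move=> n; case: (pselect (exists y', D0 y' /\ f y' = n)) => [[y' h]|nh].
    by exists y'.
  by exists x0.
have gs : forall y, D0 y -> g (f y) = y.
  move=> y Dy; have [Dg fg] := hg (f y) (ex_intro _ y (conj Dy erefl)).
  by apply: finj => //; rewrite inE.
have approx : forall x, ~ A x -> forall eta : R, (0 < eta)%R ->
    exists k, ~ A (g k) /\ d x (g k) < eta%:E.
  move=> x nAx eta eta0.
  have [del del0 hdel] : exists2 del : R, (0 < del)%R & del%:E <= dist_set d A x.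
    have dne : dist_set d A x != 0 by apply/eqP => h; apply: nAx; apply: Acl.
    have dge := dist_set_ge0 A x dm.
    move: dne dge; case: (dist_set d A x) => [v| |] //.
    - rewrite lee_fin eqe => vne vge; exists v => //.
      by rewrite lt_neqAle eq_sym vne.
    - by move=> _ _; exists 1%R => //; rewrite leey.
  have mpos : (0 < Order.min eta del)%R by rewrite lt_min eta0.
  have [y Dy dy] := D0d x Logic.I _ mpos.
  exists (f y); rewrite gs //; split.
    move=> Ay; have := le_lt_trans (dist_set_le _ _ Ay) dy.
    apply/negP; rewrite -leNgt; apply: le_trans hdel.
    by rewrite lee_fin ge_min lexx orbT.
  by apply: (lt_le_trans dy); rewrite lee_fin ge_min lexx.
pose D := [set tm g m | m in [set: seq nat]] `&` Dp d A p.
exists D; split.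
- by move=> t [].
- apply: (sub_countable (subset_card_le (@subIsetl _ _ _))).
  apply: (sub_countable (card_image_le _ _)).
  exact: countableP.
move=> s sDp e e0.
have [Kp [z [kf [Kfin Ks zA gA hlt]]]] : exists Kp z kf, [/\ finite_set Kp, Kp `<=` s.1,
    (forall i, s.1 i -> ~ Kp i -> A (z i)),
    (forall i, Kp i -> ~ A (g (kf i))) &
    lpnorm p (@inl nat nat @` s.1) (Fn d s Kp z g kf) < e%:E].
  move: p1 sDp; case: p {D} => [r||] // p1 sDp.
    by apply: claim_r => //; rewrite -lee_fin.
  exact: claim_inf.
have [m [mD hm]] := @build d A p g s Kp z kf dm p1 Kfin Ks zA gA.
exists (tm g m); first by split => //; exists m.
exact: le_lt_trans hm hlt.
Qed.

End H.

Unset Implicit Arguments.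

Theorem theorem6p2 (R : realType) (X : Type) (d : X -> X -> \bar R)
  (A : set X) (p : \bar R) :
  is_emetric d -> closed_in d A -> 1 <= p ->
  (separable_in [set: X] d -> separable_in (Dp d A p) (Wp d A p)) /\
  (separable_in (Dp d A p) (Wp d A p) ->
     separable_in [set: X] (quot_dist d A p)).
Proof.
move=> dm Acl p1; split; first exact: dir1.
exact: dir2.
Qed.
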